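(* Let $(x^{(i)},y^{(i)},s^{(i)})$, $i=1,\dots,\ell$, be the weighted centers of $w^{(i)}\in\mathbb R^m_{++}$. Let $\beta_i\in[0,1]$ with $\sum_{i=1}^\ell\beta_i=1$, and fix $j\in\{1,\dots,\ell\}$. Then $\bigl(\sum_i\beta_ix^{(i)},\,y^{(j)},\,\sum_i\beta_is^{(i)}\bigr)$ is the weighted center of $$w:=\sum_{i=1}^\ell\beta_iY^{(j)}(Y^{(i)})^{-1}w^{(i)},$$ and moreover $\sum_{k=1}^m w_k=\sum_{k=1}^m w^{(j)}_k$.
   Context: Let $A\in\mathbb R^{m\times n}$ have full column rank $n\le m$ and $b\in\mathbb R^m$ be such that $\{x:Ax\le b\}$ is bounded with nonempty interior. For $w\in\mathbb R^m_{++}$ the weighted center of $w$ is the unique $(x,y,s)$ with $Ax+s=b$, $s>0$, $A^\top y=0$, $\mathrm{Diag}(s)y=w$. $Y^{(i)}=\mathrm{Diag}(y^{(i)})$. *)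

(* Defs.v *)
From HB Require Import structures.
From mathcomp Require Import all_boot all_order all_algebra.
Set Implicit Arguments. Unset Strict Implicit. Unset Printing Implicit Defensive.
Import Order.TTheory GRing.Theory Num.Theory.
Local Open Scope ring_scope.

Section WC.
Variables (R : realFieldType) (m n : nat).

Definition full_column_rank (A : 'M[R]_(m, n)) : Prop := \rank A = n.

Definition polytope_bounded (A : 'M[R]_(m, n)) (b : 'cV[R]_m) : Prop :=
  exists M : R, forall x : 'cV[R]_n,
    (forall k, (A *m x) k 0 <= b k 0) -> forall i, `|x i 0| <= M.

Definition polytope_nonempty_interior (A : 'M[R]_(m, n)) (b : 'cV[R]_m) : Prop :=
  exists x : 'cV[R]_n, forall k, (A *m x) k 0 < b k 0.

Definition is_weighted_center (A : 'M[R]_(m, n)) (b : 'cV[R]_m)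
  (w : 'cV[R]_m) (x : 'cV[R]_n) (y s : 'cV[R]_m) : Prop :=
  [/\ A *m x + s = b,
      forall k, 0 < s k 0,
      A^T *m y = 0
    & forall k, s k 0 * y k 0 = w k 0].

End WC.

(* Main.v *)
Require Import Defs.
From HB Require Import structures.
From mathcomp Require Import all_boot all_order all_algebra.
From mathcomp Require Import ring.
Import Order.TTheory GRing.Theory Num.Theory.
Local Open Scope ring_scope.

Theorem lemmaA2 (R : realFieldType) (m n l : nat)
  (A : 'M[R]_(m, n)) (b : 'cV[R]_m)
  (hrank : full_column_rank A)
  (hbdd : polytope_bounded A b)
  (hint : polytope_nonempty_interior A b)
  (wi : 'I_l -> 'cV[R]_m)
  (xi : 'I_l -> 'cV[R]_n) (yi si : 'I_l -> 'cV[R]_m)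
  (hwpos : forall i k, 0 < wi i k 0)
  (hwc : forall i, is_weighted_center A b (wi i) (xi i) (yi i) (si i))
  (beta : 'I_l -> R)
  (hbeta : forall i, 0 <= beta i <= 1)
  (hsum : \sum_(i < l) beta i = 1)
  (j : 'I_l) :
  let w : 'cV[R]_m :=
    \col_k (\sum_(i < l) beta i * (yi j k 0 * (yi i k 0)^-1 * wi i k 0)) in
  is_weighted_center A b w (\sum_(i < l) beta i *: xi i) (yi j)
    (\sum_(i < l) beta i *: si i)
  /\ \sum_(k < m) w k 0 = \sum_(k < m) wi j k 0.
Proof.
move=> w.
set xb := \sum_(i < l) beta i *: xi i.
set sb := \sum_(i < l) beta i *: si i.
have hE : forall i, A *m xi i + si i = b by move=> i; case: (hwc i).
have hS : forall i k, 0 < si i k 0 by move=> i; case: (hwc i).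
have hT : forall i, A^T *m yi i = 0 by move=> i; case: (hwc i).
have hW : forall i k, si i k 0 * yi i k 0 = wi i k 0 by move=> i; case: (hwc i).
have hy0 : forall i k, yi i k 0 != 0.
  move=> i k; apply/eqP=> h0; have := hwpos i k; rewrite -hW h0 mulr0 ltxx.
  by [].
have sbE : forall k, sb k 0 = \sum_(i < l) beta i * si i k 0.
  by move=> k; rewrite /sb summxE; apply: eq_bigr => i _; rewrite mxE.
have hAx : A *m xb + sb = b.
  rewrite /xb /sb mulmx_sumr -big_split /=.
  under eq_bigr => i _ do rewrite -scalemxAr -scalerDr hE.
  by rewrite -scaler_suml hsum scale1r.
have hwk : forall k, sb k 0 * yi j k 0 = w k 0.
  move=> k; rewrite sbE mxE mulr_suml; apply: eq_bigr => i _.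
  rewrite -hW; have := hy0 i k => hne.
  set a := yi i k 0; set c := yi j k 0; set d := si i k 0.
  have -> : c * a^-1 * (d * a) = c * d * (a^-1 * a) by rewrite mulrC; ring.
  by rewrite mulVf // mulr1; ring.
split; first split => //.
- move=> k; rewrite sbE.
  have [/existsP [i0 hi0]|hno] := boolP [exists i, 0 < beta i].
    rewrite (bigD1 i0) //=; apply: ltr_wpDr.
      by apply: sumr_ge0 => i _; apply: mulr_ge0; [case/andP: (hbeta i)|exact: ltW].
    by apply: mulr_gt0.
  exfalso; move: hsum; rewrite big1 => [|i _].
    by move/eqP; rewrite eq_sym oner_eq0.
  apply/eqP; rewrite eq_le; case/andP: (hbeta i) => -> _; rewrite andbT.
  by rewrite leNgt; apply: contra hno => h; apply/existsP; exists i.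
- have hv : sb - si j = A *m (xi j - xb).
    have e1 : sb = b - A *m xb by rewrite -hAx addrC addKr.
    have e2 : si j = b - A *m xi j by rewrite -(hE j) addrC addKr.
    rewrite e1 e2 mulmxBr; by rewrite opprB addrC addrA subrK.

  have h0 : (sb - si j)^T *m yi j = 0.
    by rewrite hv trmx_mul -mulmxA hT mulmx0.
  have := congr1 (fun M : 'M[R]_1 => M 0 0) h0; rewrite /= mxE !mxE => hz.
  apply/eqP; rewrite -subr_eq0 -sumrB; apply/eqP; rewrite -[RHS]hz.
  apply: eq_bigr => k _; rewrite -hwk -hW !mxE.
  by rewrite mulrBl.
Qed.
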